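(* Let $X=S^1=\mathbb R/\mathbb Z$ with the arc-length metric, let $T x=2x \bmod 1$ be the doubling map, let $N=3$ and consider the rigid interaction $\gamma=0$. Then for every sufficiently small $\varepsilon>0$ the CML $T_\varepsilon$ exhibits desynchronization on a set of initial configurations of positive Lebesgue measure in $(S^1)^3$ (containing a nonempty open set).
   Context: For $\bar x=(x_1,x_2,x_3)$, $J_i(\bar x)=\{j:\rho(x_i,x_j)\le\varepsilon\}$, $(\bar Q_\varepsilon\bar x)_i=\frac1{|J_i(\bar x)|}\sum_{j\in J_i(\bar x)}x_j$ (center of gravity, computed in a local lift since particles are close), and $T_\varepsilon=\bar T\circ\bar Q_\varepsilon$ with $\bar T(\bar x)=(Tx_1,Tx_2,Tx_3)$. Writing $\bar x^t=T^t_\varepsilon\bar x$, desynchronization for $\bar x$ means $\liminf_{t\to\infty}\max_{i,j}\rho(x_i^t,x_j^t)>0$. *)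

(* Defs.v *)
From Stdlib Require Import Reals List.
Open Scope R_scope.

(* Points of S^1 = R/Z are represented by real numbers (any representative). *)

(* Signed shortest difference of t modulo 1, in [-1/2, 1/2). *)
Definition sdiff (t : R) : R := t - IZR (Int_part (t + /2)).

Definition rho (x y : R) : R := Rabs (sdiff (x - y)).

Definition Tdbl (x : R) : R := frac_part (2 * x).

(* Configurations of N = 3 particles: coordinates x 0, x 1, x 2. *)
Definition config := nat -> R.
Definition idx : list nat := 0%nat :: 1%nat :: 2%nat :: nil.

Definition J (eps : R) (x : config) (i : nat) : list nat :=
  filter (fun j => if Rle_dec (rho (x i) (x j)) eps then true else false) idx.

(* Center of gravity of {x_j : j in J_i(x)}, computed in the local lift
   around x_i (each x_j lifted to x_i + sdiff (x_j - x_i)), then taken mod 1. *)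
Definition Qbar (eps : R) (x : config) : config := fun i =>
  frac_part (x i + fold_right Rplus 0 (map (fun j => sdiff (x j - x i)) (J eps x i))
                   / INR (length (J eps x i))).

Definition Teps (eps : R) (x : config) : config := fun i => Tdbl (Qbar eps x i).

(* liminf_{t -> oo} max_{i,j} rho(x_i^t, x_j^t) > 0 *)
Definition desync (eps : R) (x : config) : Prop :=
  exists delta, 0 < delta /\ exists t0 : nat, forall t : nat, (t0 <= t)%nat ->
    exists i j, (i < 3)%nat /\ (j < 3)%nat /\
      delta <= rho (Nat.iter t (Teps eps) x i) (Nat.iter t (Teps eps) x j).

(* Main.v *)
Require Import Defs.
From Stdlib Require Import Reals List Lra.
Open Scope R_scope.

Lemma Int_part_eq : forall t (n:Z), IZR n <= t < IZR n + 1 -> Int_part t = n.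
Proof.
  intros t n H. unfold Int_part.
  assert (E : up t = (n+1)%Z).
  { symmetry; apply tech_up; rewrite plus_IZR; lra. }
  rewrite E; ring.
Qed.

Lemma sd : forall t k u, -/2 <= t < /2 -> u = t + IZR k -> sdiff u = t.
Proof.
  intros t k u Ht Hu; unfold sdiff; subst.
  rewrite (Int_part_eq _ k); [ring | lra].
Qed.

Lemma Tfrac : forall z, exists m:Z, Tdbl (frac_part z) = 2*z + IZR m.
Proof.
  intros z; unfold Tdbl, frac_part.
  exists (- 2 * Int_part z - Int_part (2 * (z - IZR (Int_part z))))%Z.
  rewrite minus_IZR, mult_IZR, ?opp_IZR. ring.
Qed.

Definition Inv eps S (x:config) := exists a (k1 k2 : Z),
  S - eps < a < eps /\ x 1%nat = x 0%nat + a + IZR k1 /\ x 2%nat = x 0%nat + S + IZR k2.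

Lemma step : forall eps S x, 0 < eps -> eps < S < 2*eps -> S < /2 ->
  Inv eps S x -> Inv eps S (Teps eps x).
Proof.
  intros eps S x He HS HS2 (a & k1 & k2 & Ha & H1 & H2).
  assert (s00 : sdiff (x 0%nat - x 0%nat) = 0) by (apply (sd _ 0); [lra | simpl; ring]).
  assert (s11 : sdiff (x 1%nat - x 1%nat) = 0) by (apply (sd _ 0); [lra | simpl; ring]).
  assert (s22 : sdiff (x 2%nat - x 2%nat) = 0) by (apply (sd _ 0); [lra | simpl; ring]).
  assert (s10 : sdiff (x 1%nat - x 0%nat) = a) by
    (apply (sd _ k1); [lra | rewrite H1; ring]).
  assert (s01 : sdiff (x 0%nat - x 1%nat) = -a) by
    (apply (sd _ (-k1)); [lra | rewrite H1, opp_IZR; ring]).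
  assert (s20 : sdiff (x 2%nat - x 0%nat) = S) by
    (apply (sd _ k2); [lra | rewrite H2; ring]).
  assert (s02 : sdiff (x 0%nat - x 2%nat) = -S) by
    (apply (sd _ (-k2)); [lra | rewrite H2, opp_IZR; ring]).
  assert (s21 : sdiff (x 2%nat - x 1%nat) = S - a) by
    (apply (sd _ (k2 - k1)); [lra | rewrite H1, H2, minus_IZR; ring]).
  assert (s12 : sdiff (x 1%nat - x 2%nat) = -(S - a)) by
    (apply (sd _ (k1 - k2)); [lra | rewrite H1, H2, minus_IZR; ring]).
  assert (A1 : Rabs a = a) by (apply Rabs_pos_eq; lra).
  assert (A2 : Rabs S = S) by (apply Rabs_pos_eq; lra).
  assert (A3 : Rabs (S - a) = S - a) by (apply Rabs_pos_eq; lra).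
  assert (J0 : J eps x 0%nat = 0%nat :: 1%nat :: nil).
  { unfold J, rho; simpl. rewrite s00, s01, s02, ?Rabs_Ropp, Rabs_R0, A1, A2.
    repeat match goal with |- context [Rle_dec ?u ?v] => destruct (Rle_dec u v) end;
    try lra; reflexivity. }
  assert (J1 : J eps x 1%nat = 0%nat :: 1%nat :: 2%nat :: nil).
  { unfold J, rho; simpl. rewrite s10, s11, s12, ?Rabs_Ropp, Rabs_R0, A1, A3.
    repeat match goal with |- context [Rle_dec ?u ?v] => destruct (Rle_dec u v) end;
    try lra; reflexivity. }
  assert (J2 : J eps x 2%nat = 1%nat :: 2%nat :: nil).
  { unfold J, rho; simpl. rewrite s20, s21, s22, ?Rabs_Ropp, Rabs_R0, A2, A3.
    repeat match goal with |- context [Rle_dec ?u ?v] => destruct (Rle_dec u v) end;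
    try lra; reflexivity. }
  destruct (Tfrac (x 0%nat + a/2)) as [m0 E0].
  destruct (Tfrac (x 1%nat + (S - 2*a)/3)) as [m1 E1].
  destruct (Tfrac (x 2%nat - (S-a)/2)) as [m2 E2].
  assert (T0 : Teps eps x 0%nat = 2*(x 0%nat + a/2) + IZR m0).
  { unfold Teps, Qbar. rewrite J0. cbn [map fold_right length].
    rewrite s00, s10, <- E0. f_equal. f_equal. simpl. field. }
  assert (T1 : Teps eps x 1%nat = 2*(x 1%nat + (S - 2*a)/3) + IZR m1).
  { unfold Teps, Qbar. rewrite J1. cbn [map fold_right length].
    rewrite s01, s11, s21, <- E1. f_equal. f_equal. simpl. field. }
  assert (T2 : Teps eps x 2%nat = 2*(x 2%nat - (S-a)/2) + IZR m2).
  { unfold Teps, Qbar. rewrite J2. cbn [map fold_right length].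
    rewrite s12, s22, <- E2. f_equal. f_equal. simpl. field. }
  exists ((2*S - a)/3), (2*k1 + m1 - m0)%Z, (2*k2 + m2 - m0)%Z.
  split; [lra|split].
  - rewrite T0, T1, H1, !minus_IZR, !plus_IZR, !mult_IZR. field.
  - rewrite T0, T2, H2, !minus_IZR, !plus_IZR, !mult_IZR. field.
Qed.

Lemma iter_inv : forall eps S x, 0 < eps -> eps < S < 2*eps -> S < /2 ->
  Inv eps S x -> forall t, Inv eps S (Nat.iter t (Teps eps) x).
Proof.
  intros eps S x He HS HS2 HI t; induction t; simpl; [exact HI|].
  apply step; auto.
Qed.

Theorem lemma3 :
  exists eps0, 0 < eps0 /\
    forall eps, 0 < eps < eps0 ->
      exists (c : config) (r : R), 0 < r /\
        forall x : config,
          (forall i, (i < 3)%nat -> Rabs (x i - c i) < r) ->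
          desync eps x.
Proof.
  exists (/4). split; [lra|].
  intros eps He.
  exists (fun i => match i with O => 0 | 1%nat => 2*eps/3 | _ => 4*eps/3 end), (eps/12).
  split; [lra|].
  intros x Hx.
  pose proof (Rabs_def2 _ _ (Hx 0%nat ltac:(auto))) as B0.
  pose proof (Rabs_def2 _ _ (Hx 1%nat ltac:(auto))) as B1.
  pose proof (Rabs_def2 _ _ (Hx 2%nat ltac:(auto))) as B2.
  simpl in B0, B1, B2.
  set (S := x 2%nat - x 0%nat).
  assert (HI : Inv eps S x).
  { exists (x 1%nat - x 0%nat), 0%Z, 0%Z. unfold S. split; [lra|split; simpl; ring]. }
  exists S. split; [unfold S; lra|]. exists 0%nat. intros t _.
  exists 0%nat, 2%nat. split; [auto|split; [auto|]].
  destruct (iter_inv eps S x ltac:(lra) ltac:(unfold S; lra) ltac:(unfold S; lra) HI t)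
    as (a & k1 & k2 & Ha & H1 & H2).
  unfold rho.
  rewrite (sd (-S) (-k2)).
  - rewrite Rabs_Ropp, Rabs_pos_eq; unfold S in *; lra.
  - unfold S in *; lra.
  - rewrite H2, opp_IZR; ring.
Qed.
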